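(* Let $\mathcal{M}$, $\mathcal{Z}$, $\mathcal{T}$ be finite sets with $|\mathcal{T}|\ge 2$. Let $\mathcal{F}$ be a family of hash functions from $\mathcal{M}$ to $\mathcal{Z}$, let $\mathcal{H}$ be an SU$_2$ family of hash functions from $\mathcal{Z}$ to $\mathcal{T}$, and let $\mathcal{G}:=\mathcal{H}\circ\mathcal{F}$ be their element-wise composition. Let $\epsilon'\ge 0$ and $\epsilon=\epsilon'(1-1/|\mathcal{T}|)+1/|\mathcal{T}|$. Then $\mathcal{G}$ is $\epsilon$-ASU$_2$ if and only if $\mathcal{F}$ is $\epsilon'$-AU$_2$.
   Context: Hash function families are finite families (multisets indexed by keys) of functions. Element-wise composition: $\mathcal{H}\circ\mathcal{F}$ is the family $(h\circ f)_{(h,f)\in\mathcal{H}\times\mathcal{F}}$, so $|\mathcal{G}|=|\mathcal{H}||\mathcal{F}|$, counted with multiplicity. A family $\mathcal{F}$ of functions $\mathcal{M}\to\mathcal{Z}$ is $\epsilon'$-Almost Universal$_2$ ($\epsilon'$-AU$_2$) if for any two distinct $m_1,m_2\in\mathcal{M}$, the number of $f\in\mathcal{F}$ with $f(m_1)=f(m_2)$ is at most $\epsilon'|\mathcal{F}|$. A family $\mathcal{G}$ of functions $\mathcal{M}\to\mathcal{T}$ is $\epsilon$-Almost Strongly Universal$_2$ ($\epsilon$-ASU$_2$) if (a) for every $m_1\in\mathcal{M}$ and $t_1\in\mathcal{T}$, the number of $g\in\mathcal{G}$ with $g(m_1)=t_1$ is exactly $|\mathcal{G}|/|\mathcal{T}|$;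 and (b) for all distinct $m_1,m_2\in\mathcal{M}$ and all $t_1,t_2\in\mathcal{T}$ (possibly equal), among those $g$ with $g(m_1)=t_1$, the fraction that also satisfy $g(m_2)=t_2$ is at most $\epsilon$, i.e. $|\{g: g(m_1)=t_1, g(m_2)=t_2\}|\le \epsilon|\mathcal{G}|/|\mathcal{T}|$. The family is Strongly Universal$_2$ (SU$_2$) if it is $\epsilon$-ASU$_2$ with $\epsilon=1/|\mathcal{T}|$. *)

(* Defs.v *)
From HB Require Import structures.
From mathcomp Require Import all_boot all_order all_algebra.
Set Implicit Arguments. Unset Strict Implicit. Unset Printing Implicit Defensive.
Import Order.TTheory GRing.Theory Num.Theory.
Local Open Scope ring_scope.

(* A hash family from M to Z is a finite family indexed by a finite key type K
   (multiset, counted with multiplicity): F : K -> M -> Z, with |F| = #|K|. *)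

Definition hcomp (KH KF : finType) (M Z T : Type)
  (H : KH -> Z -> T) (F : KF -> M -> Z) : KH * KF -> M -> T :=
  fun k m => H k.1 (F k.2 m).

Definition AU2 (R : realFieldType) (K M Z : finType) (F : K -> M -> Z) (e : R) : Prop :=
  forall m1 m2 : M, m1 != m2 ->
    (#|[set k : K | F k m1 == F k m2]|%:R : R) <= e * #|K|%:R.

Definition ASU2 (R : realFieldType) (K M T : finType) (G : K -> M -> T) (e : R) : Prop :=
  (forall (m1 : M) (t1 : T),
     (#|[set k : K | G k m1 == t1]|%:R : R) = #|K|%:R / #|T|%:R) /\
  (forall (m1 m2 : M) (t1 t2 : T), m1 != m2 ->
     (#|[set k : K | (G k m1 == t1) && (G k m2 == t2)]|%:R : R)
       <= e * #|K|%:R / #|T|%:R).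

Definition SU2 (R : realFieldType) (K M T : finType) (G : K -> M -> T) : Prop :=
  ASU2 G ((#|T|%:R : R)^-1).

(* Main.v *)
Require Import Defs.
From HB Require Import structures.
From mathcomp Require Import all_boot all_order all_algebra ring lra.
Import Order.TTheory GRing.Theory Num.Theory.
Local Open Scope ring_scope.
Set Implicit Arguments.

Lemma card_setS (I : finType) (P : pred I) :
  #|[set x | P x]| = (\sum_x (P x : nat))%N.
Proof. by rewrite -sum1dep_card big_mkcond; apply: eq_bigr => x _; case: (P x). Qed.

Lemma card_prodS (A B : finType) (P : A * B -> bool) :
  #|[set k | P k]| = (\sum_(b : B) #|[set a | P (a, b)]|)%N.
Proof.
rewrite card_setS.
rewrite (eq_bigr (fun b => \sum_a (P (a, b) : nat))%N); last by move=> b _; rewrite card_setS.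
rewrite exchange_big pair_big /=; apply: eq_bigr => [[a b]] _ //.
Qed.

Lemma card_part (I J : finType) (P : pred I) (g : I -> J) :
  #|[set x | P x]| = (\sum_(j : J) #|[set x | P x && (g x == j)]|)%N.
Proof.
rewrite -sum1dep_card (partition_big g xpredT) //=.
by apply: eq_bigr => j _; rewrite sum1dep_card.
Qed.

Lemma sum_eq_le (R : realFieldType) (J : finType) (x : J -> R) (c : R) :
  (forall j, x j <= c) -> \sum_j x j = \sum_(j : J) c -> forall j, x j = c.
Proof.
move=> hle hs j; apply/eqP; rewrite eq_le hle /=.
move: hs; rewrite (bigD1 j) //= [in X in _ = X](bigD1 j) //= => hs.
have : \sum_(i | i != j) x i <= \sum_(i | i != j) c by apply: ler_sum.
move=> h; rewrite -(lerD2r (\sum_(i | i != j) x i)) hs lerD2l //.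
Qed.
Section S.
Variables (R : realFieldType) (Z T KH : finType) (H : KH -> Z -> T).
Hypothesis hT : (2 <= #|T|)%N.
Hypothesis hH : SU2 R H.
Let n : R := #|T|%:R.
Let kh : R := #|KH|%:R.

Lemma n_neq0 : n != 0.
Proof. by rewrite /n pnatr_eq0 -lt0n; apply: leq_trans hT. Qed.

Lemma pc_neq z1 z2 t1 t2 : z1 != z2 ->
  (#|[set h | (H h z1 == t1) && (H h z2 == t2)]|%:R : R) = kh / n / n.
Proof.
move=> hz; case: hH => h1 h2.
pose x t := (#|[set h | (H h z1 == t1) && (H h z2 == t)]|%:R : R).
have := @sum_eq_le R T x (n^-1 * kh / n).
have -> : n^-1 * kh / n = kh / n / n by rewrite [n^-1 * kh]mulrC.
apply.
  move=> t; rewrite /x; have := h2 z1 z2 t1 t hz; by rewrite [n^-1 * _]mulrC.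
rewrite /x -natr_sum -card_part h1 sumr_const -/n -/kh.
rewrite -mulr_natr -/n; field; exact: n_neq0.
Qed.

Lemma pc_eq z t1 t2 :
  (#|[set h | (H h z == t1) && (H h z == t2)]|%:R : R) =
  if t1 == t2 then kh / n else 0.
Proof.
case: hH => h1 _; case: eqP => [<-|ne].
  by rewrite -(h1 z t1); congr (_%:R); apply: eq_card => h; rewrite !inE andbb.
rewrite (_ : [set h | _] = set0) ?cards0 //; apply/setP => h; rewrite !inE.
by apply/negP => /andP [/eqP -> /eqP].
Qed.
End S.

Theorem theorem1 (R : realFieldType) (M Z T KF KH : finType)
  (F : KF -> M -> Z) (H : KH -> Z -> T) (e' : R)
  (hT : (2 <= #|T|)%N) (hKH : (0 < #|KH|)%N)
  (hH : SU2 R H) (he' : 0 <= e') :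
  ASU2 (hcomp H F) (e' * (1 - (#|T|%:R)^-1) + (#|T|%:R)^-1)
  <-> AU2 F e'.
Proof.
have n0 := @n_neq0 R T hT.
set n : R := #|T|%:R in n0 *.
have ngt : 1 < n by rewrite /n ltr1n.
have ngt0 : 0 < n by apply: lt_trans ngt.
have khgt : (0 : R) < #|KH|%:R by rewrite ltr0n.
set kh : R := #|KH|%:R in khgt *.
set kf : R := #|KF|%:R.
have kf0 : 0 <= kf by rewrite /kf ler0n.
have cardG : (#|{: KH * KF}|%:R : R) = kh * kf by rewrite card_prod natrM.
set D := kh / n - kh / n / n.
have Dgt : 0 < D.
  by rewrite /D subr_gt0 ltr_pdivrMr // divfK // ltr_pdivrMr // ltr_pMr.
have cnt : forall m1 m2 t1 t2,
  (#|[set k | (hcomp H F k m1 == t1) && (hcomp H F k m2 == t2)]|%:R : R) =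
  \sum_f (#|[set h | (H h (F f m1) == t1) && (H h (F f m2) == t2)]|%:R : R).
  by move=> m1 m2 t1 t2; rewrite card_prodS natr_sum.
have cnt_eq : forall m1 m2 t,
  (#|[set k | (hcomp H F k m1 == t) && (hcomp H F k m2 == t)]|%:R : R) =
  kf * (kh / n / n) + #|[set f | F f m1 == F f m2]|%:R * D.
  move=> m1 m2 t; rewrite cnt.
  rewrite (eq_bigr (fun f => kh / n / n + ((F f m1 == F f m2) : nat)%:R * D)).
    rewrite big_split /= sumr_const -mulr_suml -natr_sum -card_setS /kf.
    by rewrite [X in _ = X + _]mulr_natl.
  move=> f _; case: eqP => [->|/eqP ne].
    by rewrite (pc_eq hH) eqxx /D -/n -/kh /=; ring.
  by rewrite (pc_neq hT hH) // -/n -/kh /=; ring.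
have key : forall a : R, (kf * (kh / n / n) + a * D <=
    (e' * (1 - n^-1) + n^-1) * #|{: KH * KF}|%:R / n) = (a <= e' * kf).
  move=> a; rewrite cardG.
  have -> : (e' * (1 - n^-1) + n^-1) * (kh * kf) / n =
     kf * (kh / n / n) + (e' * kf) * D by rewrite /D; field.
  by rewrite lerD2l ler_pM2r.
split.
  case=> _ h2 m1 m2 hm.
  have [t0 _] : exists t0 : T, true.
    by move: hT; rewrite cardE; case: (enum T) => [|x s] // _; exists x.
  by rewrite -key -(cnt_eq _ _ t0); apply: h2.
move=> hF; split.
  move=> m1 t1; rewrite card_prodS natr_sum.
  rewrite (eq_bigr (fun _ => kh / n)); last by move=> f _; case: hH => h1 _; exact: (h1 (F f m1) t1).
  by rewrite sumr_const cardG /kf -mulr_natl /n; field.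
move=> m1 m2 t1 t2 hm.
case: (eqVneq t1 t2) => [<-|tne].
  rewrite cnt_eq key; exact: hF.
rewrite cnt.
apply: (le_trans (y := \sum_(f : KF) kh / n / n)).
  apply: ler_sum => f _; case: (eqVneq (F f m1) (F f m2)) => [->|ne].
    by rewrite (pc_eq hH) (negbTE tne) !divr_ge0 // ltW.
  by rewrite (pc_neq hT hH).
rewrite sumr_const -/kf cardG.
have -> : (e' * (1 - n^-1) + n^-1) * (kh * kf) / n =
   kf * (kh / n / n) + (e' * kf) * D by rewrite /D; field.
by rewrite -mulr_natl -/kf lerDl mulr_ge0 ?mulr_ge0 // ltW.
Qed.
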